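(* Let $n,m$ be positive integers. Let $\boldsymbol\alpha,\boldsymbol\beta\in\mathbb{R}^m_{\geq 0}$ with $\sum_i\alpha_i=\sum_j\beta_j=1/n$, and let $\mathbf C_0,\dots,\mathbf C_{n-1}\in\mathbb{R}^{m\times m}_{\geq 0}$, writing $C_{ijk}$ for the $(i,j)$-entry of $\mathbf C_k$. Consider the problem $$\text{(P)}\quad \min_{\mathbf T_0,\dots,\mathbf T_{n-1}\in\mathbb{R}^{m\times m}_{\geq 0}}\ \sum_{k=0}^{n-1}\langle \mathbf C_k,\mathbf T_k\rangle\quad\text{s.t.}\quad \sum_{k=0}^{n-1}\mathbf T_k\mathbf 1_m=\boldsymbol\alpha,\ \ \sum_{k=0}^{n-1}\mathbf T_k^\top\mathbf 1_m=\boldsymbol\beta,$$ and the small problem $$\text{(S)}\quad \min_{\mathbf S\in\mathbb{R}^{m\times m}_{\geq 0}}\ \langle\mathbf G,\mathbf S\rangle\quad\text{s.t.}\quad \mathbf S\mathbf 1_m=\boldsymbol\alpha,\ \ \mathbf S^\top\mathbf 1_m=\boldsymbol\beta,$$ where $G_{ij}:=\min_{0\le k\le n-1}C_{ijk}$. Let $\mathbf S^*$ be an optimal solution of (S). Define $\mathbf T^*_0,\dots,\mathbf T^*_{n-1}$ by $T^*_{ijk}=S^*_{ij}$ if $k=\min\big(\operatorname{argmin}_{0\le k'\le n-1}C_{ijk'}\big)$ and $T^*_{ijk}=0$ otherwise, where $T^*_{ijk}$ denotes the $(i,j)$-entry of $\mathbf T^*_k$. Then $(\mathbf T^*_k)_{k=0,\dots,n-1}$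 is an optimal solution of (P), and the optimal objective value of (P) equals that of (S).
   Context: $\langle\mathbf X,\mathbf Y\rangle=\sum_{i,j}X_{ij}Y_{ij}$ is the Frobenius inner product and $\mathbf 1_m$ is the all-ones vector in $\mathbb{R}^m$. $\operatorname{argmin}_{k'}C_{ijk'}$ is the set of indices attaining the minimum, and the smallest such index is taken. *)

(* Defs.v *)
From mathcomp Require Import all_boot all_order all_algebra.
Set Implicit Arguments. Unset Strict Implicit. Unset Printing Implicit Defensive.
Import Order.TTheory GRing.Theory Num.Theory.
Local Open Scope ring_scope.

Section Defs.
Variable R : realFieldType.

Definition frob (m : nat) (X Y : 'M[R]_m) : R :=
  \sum_(i < m) \sum_(j < m) X i j * Y i j.

Definition nonneg_mx (m : nat) (X : 'M[R]_m) : Prop := forall i j, 0 <= X i j.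

Definition ones (m : nat) : 'cV[R]_m := const_mx 1.

Definition feasP (n m : nat) (alpha beta : 'cV[R]_m) (T : 'I_n -> 'M[R]_m) : Prop :=
  (forall k, nonneg_mx (T k)) /\
  \sum_(k < n) (T k *m ones m) = alpha /\
  \sum_(k < n) ((T k)^T *m ones m) = beta.

Definition objP (n m : nat) (C T : 'I_n -> 'M[R]_m) : R :=
  \sum_(k < n) frob (C k) (T k).

Definition optimalP (n m : nat) (alpha beta : 'cV[R]_m) (C T : 'I_n -> 'M[R]_m) : Prop :=
  feasP alpha beta T /\
  forall T', feasP alpha beta T' -> objP C T <= objP C T'.

Definition feasS (m : nat) (alpha beta : 'cV[R]_m) (S : 'M[R]_m) : Prop :=
  nonneg_mx S /\ S *m ones m = alpha /\ S^T *m ones m = beta.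

Definition optimalS (m : nat) (alpha beta : 'cV[R]_m) (G S : 'M[R]_m) : Prop :=
  feasS alpha beta S /\
  forall S', feasS alpha beta S' -> frob G S <= frob G S'.

(* G_ij = min_{0<=k<=n-1} C_ijk  (n > 0; the seed C_{ij0} does not change the min) *)
Definition Gmin (n m : nat) (hn : (0 < n)%N) (C : 'I_n -> 'M[R]_m) : 'M[R]_m :=
  \matrix_(i, j) \big[Num.min/C (Ordinal hn) i j]_(k < n) C k i j.

Definition is_argmin (n m : nat) (C : 'I_n -> 'M[R]_m) (i j : 'I_m) (k : 'I_n) : Prop :=
  forall k' : 'I_n, C k i j <= C k' i j.

Definition is_min_argmin (n m : nat) (C : 'I_n -> 'M[R]_m) (i j : 'I_m) (k : 'I_n) : Prop :=
  is_argmin C i j k /\ forall k' : 'I_n, (k' < k)%N -> ~ is_argmin C i j k'.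

End Defs.

(* Main.v *)
Require Import Defs.
From mathcomp Require Import all_boot all_order all_algebra.
Import Order.TTheory GRing.Theory Num.Theory.
Local Open Scope ring_scope.

Lemma key (R : realFieldType) (n m : nat) (hn : (0 < n)%N) (C : 'I_n -> 'M[R]_m)
  (S : 'M[R]_m) (T : 'I_n -> 'M[R]_m)
  (hT : forall k i j,
        (is_min_argmin C i j k -> T k i j = S i j) /\
        (~ is_min_argmin C i j k -> T k i j = 0)) i j :
  exists k0, is_argmin C i j k0 /\ Gmin hn C i j = C k0 i j /\
     forall k, T k i j = if k == k0 then S i j else 0.
Proof.
have [k1 _ Hk1] := arg_minP (fun k => C k i j) (isT : predT (Ordinal hn)).
pose P x := [exists k : 'I_n, (val k == x) && [forall k', C k i j <= C k' i j]].
have exP : exists x, P x.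
  exists (val k1); apply/existsP.
  exists k1; rewrite eqxx /=.
  by apply/forallP => k'; apply: Hk1.
case: (ex_minnP exP) => x /existsP [k0 /andP [/eqP Hx /forallP Hk0]] Hmin.
have A0 : is_argmin C i j k0 by move=> k'; apply: Hk0.
have M0 : is_min_argmin C i j k0.
  split=> // k' Hlt Ha.
  have : P k' by apply/existsP; exists k'; rewrite eqxx /=; apply/forallP.
  by move/Hmin; rewrite -Hx leqNgt Hlt.
exists k0; split=> //; split.
  apply/le_anti/andP; split.
    rewrite /Gmin mxE (bigD1 k0) //=.
    by rewrite ge_min lexx.
  rewrite /Gmin mxE; apply: (big_ind (fun x => C k0 i j <= x)) => //.
  by move=> a b Ha Hb; rewrite le_min Ha Hb.
move=> k; case: eqP => [->|Hne]; first by apply: (proj1 (hT k0 i j)).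
apply: (proj2 (hT k i j)) => -[Ak Mk].
apply: Hne; apply/val_inj.
case: (ltngtP (val k) (val k0)) => // H.
  by case: (proj2 M0 k H).
by case: (Mk k0 H).
Qed.

Theorem theorem1 (R : realFieldType) (n m : nat) (hn : (0 < n)%N) (hm : (0 < m)%N)
    (alpha beta : 'cV[R]_m)
    (halpha : forall i, 0 <= alpha i 0) (hbeta : forall j, 0 <= beta j 0)
    (hsa : \sum_(i < m) alpha i 0 = (n%:R)^-1)
    (hsb : \sum_(j < m) beta j 0 = (n%:R)^-1)
    (C : 'I_n -> 'M[R]_m) (hC : forall k, nonneg_mx (C k))
    (Sstar : 'M[R]_m) (hS : optimalS alpha beta (Gmin hn C) Sstar)
    (Tstar : 'I_n -> 'M[R]_m)
    (hT : forall k i j,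
        (is_min_argmin C i j k -> Tstar k i j = Sstar i j) /\
        (~ is_min_argmin C i j k -> Tstar k i j = 0)) :
  optimalP alpha beta C Tstar /\ objP C Tstar = frob (Gmin hn C) Sstar.
Proof.
have K := @key R n m hn C Sstar Tstar hT.
case: hS => [[Snn [Sa Sb]] Sopt].
have sumT : forall (f : 'I_n -> R) i j k0,
    (forall k, Tstar k i j = if k == k0 then Sstar i j else 0) ->
    \sum_(k < n) f k * Tstar k i j = f k0 * Sstar i j.
  move=> f i j k0 H.
  rewrite (bigD1 k0) //= big1 ?addr0; first by rewrite H eqxx.
  by move=> k /negbTE Hk; rewrite H Hk mulr0.
have sumT1 : forall i j, \sum_(k < n) Tstar k i j = Sstar i j.
  move=> i j; case: (K i j) => k0 [_ [_ H]].
  rewrite -[RHS]mul1r -(sumT (fun _ => 1) i j k0 H).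
  by apply: eq_bigr => k _; rewrite mul1r.
have feasT : feasP alpha beta Tstar.
  split.
    move=> k i j; case: (K i j) => k0 [_ [_ H]]; rewrite H.
    by case: eqP.
  split.
    rewrite -Sa; apply/matrixP => i z; rewrite summxE !mxE.
    rewrite (eq_bigr (fun k => \sum_j Tstar k i j)); last first.
      by move=> k _; rewrite mxE; apply: eq_bigr => j _; rewrite mxE mulr1.
    rewrite exchange_big; apply: eq_bigr => j _; rewrite mxE mulr1.
    by rewrite sumT1.
  rewrite -Sb; apply/matrixP => j z; rewrite summxE !mxE.
  rewrite (eq_bigr (fun k => \sum_i Tstar k i j)); last first.
    by move=> k _; rewrite mxE; apply: eq_bigr => i _; rewrite !mxE mulr1.
  rewrite exchange_big; apply: eq_bigr => i _; rewrite !mxE mulr1.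
  by rewrite sumT1.
have objT : objP C Tstar = frob (Gmin hn C) Sstar.
  rewrite /objP /frob.
  rewrite (eq_bigr (fun k => \sum_i \sum_j C k i j * Tstar k i j)) //.
  rewrite exchange_big; apply: eq_bigr => i _.
  rewrite exchange_big; apply: eq_bigr => j _.
  case: (K i j) => k0 [_ [HG H]].
  by rewrite (sumT (fun k => C k i j) i j k0 H) HG.
split=> //; split=> // T' [T'nn [T'a T'b]].
pose S' := \matrix_(i, j) \sum_(k < n) T' k i j.
have feasS' : feasS alpha beta S'.
  split.
    by move=> i j; rewrite mxE; apply: sumr_ge0 => k _; apply: T'nn.
  split.
    rewrite -T'a; apply/matrixP => i z; rewrite summxE !mxE.
    rewrite (eq_bigr (fun k => \sum_j T' k i j)); last first.
      by move=> k _; rewrite mxE; apply: eq_bigr => j _; rewrite mxE mulr1.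
    rewrite exchange_big; apply: eq_bigr => j _.
    by rewrite !mxE mulr1.
  rewrite -T'b; apply/matrixP => j z; rewrite summxE !mxE.
  rewrite (eq_bigr (fun k => \sum_i T' k i j)); last first.
    by move=> k _; rewrite mxE; apply: eq_bigr => i _; rewrite !mxE mulr1.
  rewrite exchange_big; apply: eq_bigr => i _.
  by rewrite !mxE mulr1.
rewrite objT; apply: (le_trans (Sopt _ feasS')).
rewrite /objP /frob.
rewrite [X in _ <= X]exchange_big.
apply: ler_sum => i _.
rewrite [X in _ <= X]exchange_big; apply: ler_sum => j _.
rewrite [S' i j]mxE mulr_sumr; apply: ler_sum => k _.
apply: ler_wpM2r; first by apply: T'nn.
case: (K i j) => k0 [A0 [HG _]]; rewrite HG; apply: A0.
Qed.
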